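(* Let $(Y,\mathfrak{T})$ be a fuzzy topological space and let $\mathcal{P},\mathcal{G}$ be fuzzy primals on $Y$. Then $\mathfrak{T}^\diamond_{\mathcal{P}\cup\mathcal{G}}=\mathfrak{T}^\diamond_{\mathcal{P}}\cap\mathfrak{T}^\diamond_{\mathcal{G}}$.
   Context: Let $Y$ be a nonempty set and $\mathbb{I}=[0,1]$. A fuzzy set in $Y$ is a map $Y\to\mathbb{I}$; $\mathbb{I}^Y$ is the set of all fuzzy sets; $0_Y,1_Y$ are the constant maps with values $0,1$; $\mu\subseteq\nu$ means $\mu(y)\le\nu(y)$ for all $y$; unions/intersections are pointwise sup/inf; $\bar\mu=1_Y-\mu$. For $\mu,\nu\in\mathbb{I}^Y$, $(\mu\oplus\nu)(y)=\min(\mu(y)+\nu(y),1)$. A fuzzy point $y_t$ ($y\in Y$, $t\in(0,1]$) is the fuzzy set with value $t$ at $y$ and $0$ elsewhere; $y_t\in\mu$ means $t\le\mu(y)$. We write $y_t\prec\mu$ if $t+\mu(y)>1$. A set $F$ of fuzzy points is identified with the fuzzy set $y\mapsto\sup\{t: y_t\in F\}$ (with $\sup\emptyset=0$). A fuzzy topology on $Y$ is a family $\mathfrak{T}\subseteq\mathbb{I}^Y$ containing $0_Y,1_Y$ and closed under finite intersections and arbitrary unions. For a fuzzy point $y_t$, $\mathcal{Q}(y_t)=\{\mu\in\mathfrak{T}: y_t\prec\mu\}$. A fuzzy primal on $Y$ is a family $\mathcal{P}\subseteq\mathbb{I}^Y$ such that: (i) $1_Y\notin\mathcal{P}$; (ii)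 if $\mu\in\mathcal{P}$ and $\nu\subseteq\mu$ then $\nu\in\mathcal{P}$; (iii) if $\mu\cap\nu\in\mathcal{P}$ then $\mu\in\mathcal{P}$ or $\nu\in\mathcal{P}$. (The union of two fuzzy primals is a fuzzy primal.) For a fuzzy primal $\mathcal{P}$ and $\lambda\in\mathbb{I}^Y$, $\lambda^\diamond_{\mathcal{P}}$ is the set of fuzzy points $y_t$ such that $\bar{\lambda}\oplus\bar{\mu}\in\mathcal{P}$ for every $\mu\in\mathcal{Q}(y_t)$; $Cl^\diamond_{\mathcal{P}}(\lambda)=\lambda\cup\lambda^\diamond_{\mathcal{P}}$; and $\mathfrak{T}^\diamond_{\mathcal{P}}=\{\mu\in\mathbb{I}^Y: Cl^\diamond_{\mathcal{P}}(\bar{\mu})=\bar{\mu}\}$. *)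

(* Defs.v *)
From HB Require Import structures.
From mathcomp Require Import all_boot all_order all_algebra.
From mathcomp Require Import all_classical all_reals.
Set Implicit Arguments. Unset Strict Implicit. Unset Printing Implicit Defensive.
Import Order.TTheory GRing.Theory Num.Theory.
Local Open Scope ring_scope.
Local Open Scope classical_set_scope.

Section FuzzyDefs.
Variables (R : realType) (Y : Type).

Definition is_fuzzy (mu : Y -> R) : Prop := forall y, 0 <= mu y <= 1.

Definition fzero : Y -> R := fun _ => 0.
Definition fone : Y -> R := fun _ => 1.
Definition fsubset (mu nu : Y -> R) : Prop := forall y, mu y <= nu y.
Definition fcompl (mu : Y -> R) : Y -> R := fun y => 1 - mu y.
Definition fcap (mu nu : Y -> R) : Y -> R := fun y => Num.min (mu y) (nu y).
Definition fcup (mu nu : Y -> R) : Y -> R := fun y => Num.max (mu y) (nu y).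
(* arbitrary union: pointwise supremum (sup of the empty set is 0) *)
Definition fbigcup (F : set (Y -> R)) : Y -> R :=
  fun y => sup [set mu y | mu in F].
Definition foplus (mu nu : Y -> R) : Y -> R :=
  fun y => Num.min (mu y + nu y) 1.

(* a set of fuzzy points y_t (t in (0,1]) is represented by S : Y -> R -> Prop,
   S y t meaning y_t belongs to the set; it is identified with the fuzzy set
   y |-> sup {t | y_t in S}. *)
Definition is_fpoint_set (S : Y -> R -> Prop) : Prop :=
  forall y t, S y t -> 0 < t <= 1.
Definition fpset_to_fuzzy (S : Y -> R -> Prop) : Y -> R :=
  fun y => sup [set t | S y t].

Definition fuzzy_topology (T : set (Y -> R)) : Prop :=
  (forall mu, T mu -> is_fuzzy mu) /\
  T fzero /\ T fone /\
  (forall mu nu, T mu -> T nu -> T (fcap mu nu)) /\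
  (forall F : set (Y -> R), F `<=` T -> T (fbigcup F)).

Definition Qnbhd (T : set (Y -> R)) (y : Y) (t : R) : set (Y -> R) :=
  [set mu | T mu /\ t + mu y > 1].

Definition fuzzy_primal (P : set (Y -> R)) : Prop :=
  (forall mu, P mu -> is_fuzzy mu) /\
  ~ P fone /\
  (forall mu nu, P mu -> is_fuzzy nu -> fsubset nu mu -> P nu) /\
  (forall mu nu, is_fuzzy mu -> is_fuzzy nu -> P (fcap mu nu) -> P mu \/ P nu).

Definition diamond (T P : set (Y -> R)) (lam : Y -> R) : Y -> R -> Prop :=
  fun y t => (0 < t <= 1) /\
    forall mu, Qnbhd T y t mu -> P (foplus (fcompl lam) (fcompl mu)).

Definition Cl_diamond (T P : set (Y -> R)) (lam : Y -> R) : Y -> R :=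
  fcup lam (fpset_to_fuzzy (diamond T P lam)).

Definition T_diamond (T P : set (Y -> R)) : set (Y -> R) :=
  [set mu | is_fuzzy mu /\ Cl_diamond T P (fcompl mu) = fcompl mu].

End FuzzyDefs.

(* Main.v *)
Require Import Defs.
From mathcomp Require Import all_boot all_order all_algebra.
From mathcomp Require Import all_classical all_reals.
Local Open Scope classical_set_scope.
Import Order.TTheory GRing.Theory Num.Theory.

Lemma key {R : realType} {Y : Type} {T Q : set (Y -> R)} {mu : Y -> R} :
  is_fuzzy mu ->
  (Cl_diamond T Q (fcompl mu) = fcompl mu <->
   forall y t, diamond T Q (fcompl mu) y t -> (t <= 1 - mu y)%R).
Proof.
move=> fmu; split.
- move=> E y t D.
  have Ey := congr1 (fun f => f y) E; rewrite /Cl_diamond /fcup /= in Ey.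
  have hub : has_ubound [set t | diamond T Q (fcompl mu) y t].
    by exists 1%R => s [/andP[_ ->] _].
  apply: (@le_trans _ _ (fpset_to_fuzzy (diamond T Q (fcompl mu)) y)).
    exact: (ub_le_sup hub).
  move: Ey; rewrite /fcompl => <-; by rewrite le_max lexx orbT.
- move=> H; apply: funext => y; rewrite /Cl_diamond /fcup /fpset_to_fuzzy.
  apply/max_idPl.
  have [ne|e] := pselect ([set t | diamond T Q (fcompl mu) y t] !=set0).
    apply: ge_sup => // s Ds; exact: H.
  have -> : [set t | diamond T Q (fcompl mu) y t] = set0.
    apply/seteqP; split => // s Ds; exfalso; apply: e; by exists s.
  rewrite sup0 /fcompl subr_ge0; by case/andP: (fmu y).
Qed.

Theorem theorem4p11 (R : realType) (Y : Type) (T P G : set (Y -> R)) :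
  inhabited Y ->
  fuzzy_topology T -> fuzzy_primal P -> fuzzy_primal G ->
  T_diamond T (P `|` G) = T_diamond T P `&` T_diamond T G.
Proof.
move=> _ [Tf [_ [_ [Tcap _]]]] [Pf [_ [Pdown _]]] [Gf [_ [Gdown _]]].
apply/seteqP; split => mu.
- move=> [fmu /(key fmu) H]; split; split => //; apply/(key fmu) => y t [tb D];
    apply: H; split => // nu Qn; [left|right]; exact: D.
- move=> [[fmu /(key fmu) HP] [_ /(key fmu) HG]]; split => //.
  apply/(key fmu) => y t [tb D].
  have fx : forall nu, T nu -> is_fuzzy (foplus (fcompl (fcompl mu)) (fcompl nu)).
    move=> nu Tn z; rewrite /foplus /fcompl; have := fmu z; have := Tf _ Tn z.
    case/andP => n0 n1 /andP[m0 m1].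
    apply/andP; split; last by rewrite ge_min lexx orbT.
    by rewrite le_min ler01 andbT addr_ge0 // subr_ge0 // lerBlDr lerDl.
  case: (pselect (diamond T P (fcompl mu) y t)) => [dp|ndp]; first exact: HP.
  case: (pselect (diamond T G (fcompl mu) y t)) => [dg|ndg]; first exact: HG.
  exfalso.
  have [n1 [Q1 nP]] : exists n1, Qnbhd T y t n1 /\ ~ P (foplus (fcompl (fcompl mu)) (fcompl n1)).
    apply: contra_notP ndp => h; split => // nu Qn.
    apply: contra_notP h => np; by exists nu.
  have [n2 [Q2 nG]] : exists n2, Qnbhd T y t n2 /\ ~ G (foplus (fcompl (fcompl mu)) (fcompl n2)).
    apply: contra_notP ndg => h; split => // nu Qn.
    apply: contra_notP h => np; by exists nu.
  have Qc : Qnbhd T y t (fcap n1 n2).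
    case: Q1 Q2 => T1 l1 [T2 l2]; split; first exact: Tcap.
    rewrite /fcap /=; rewrite /Num.min; by case: ifP.
  have sub1 : fsubset (foplus (fcompl (fcompl mu)) (fcompl n1))
                      (foplus (fcompl (fcompl mu)) (fcompl (fcap n1 n2))).
    move=> z; rewrite /foplus /fcompl /fcap; apply: le_min2; last exact: lexx.
    by rewrite lerD2l lerD2l lerN2 ge_min lexx.
  have sub2 : fsubset (foplus (fcompl (fcompl mu)) (fcompl n2))
                      (foplus (fcompl (fcompl mu)) (fcompl (fcap n1 n2))).
    move=> z; rewrite /foplus /fcompl /fcap; apply: le_min2; last exact: lexx.
    by rewrite lerD2l lerD2l lerN2 ge_min lexx orbT.
  case: (D _ Qc) => [hp|hg].
  + apply: nP; apply: Pdown hp _ sub1; exact: fx (proj1 Q1).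
  + apply: nG; apply: Gdown hg _ sub2; exact: fx (proj1 Q2).
Qed.
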